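(* Let $G$ be a graph and let $\{e_1,e_2\}$ be a $2$-edge-cut in $G$. Suppose that $\{e_1,f_1,f_2\}$ is a $3$-edge-cut in $G$. Then $\{e_2,f_1,f_2\}$ is a $3$-edge-cut in $G$ as well.
   Context: Graphs may have parallel edges but no loops. A $k$-edge-cut is an inclusion-minimal edge cut of size $k$: a set of $k$ edges whose removal increases the number of connected components of $G$, such that no proper subset has this property. *)

(* Defs.v *)
(* Finite multigraphs (parallel edges allowed, no loops):
   vertex type V, edge type E, each edge e has endpoints src e and tgt e. *)
From mathcomp Require Import all_boot.
Set Implicit Arguments. Unset Strict Implicit. Unset Printing Implicit Defensive.

Section EdgeCuts.
Variables (V E : finType) (src tgt : E -> V).

Definition adj_wo (S : {set E}) : rel V := fun x y =>
  [exists e, (e \notin S) &&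
     (((src e == x) && (tgt e == y)) || ((src e == y) && (tgt e == x)))].

Definition ncomp (S : {set E}) : nat :=
  #|[set [set y | connect (adj_wo S) x y] | x : V]|.

Definition is_edge_cut (S : {set E}) : Prop := ncomp set0 < ncomp S.

Definition is_k_edge_cut (k : nat) (S : {set E}) : Prop :=
  [/\ #|S| = k, is_edge_cut S & forall T : {set E}, T \proper S -> ~ is_edge_cut T].

End EdgeCuts.

(* Main.v *)
Require Import Defs.
From mathcomp Require Import all_boot.
Set Implicit Arguments. Unset Strict Implicit. Unset Printing Implicit Defensive.

Ltac subt := let x := fresh in move=> x; rewrite !inE; do ! case: (_ == _).

Section Aux.
Variables (V E : finType) (src tgt : E -> V).
Implicit Types (S : {set E}) (d e : E) (x y : V).

Local Notation R S := (connect (adj_wo src tgt S)).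
Local Notation Re S d := (connect (adj_wo src tgt S) (src d) (tgt d)).

Lemma adj_sym S : symmetric (adj_wo src tgt S).
Proof.
move=> x y; apply/existsP/existsP => -[d /andP[dS H]]; exists d;
  by rewrite dS /= orbC.
Qed.

Lemma R_sym S x y : R S x y = R S y x.
Proof. exact: (sym_connect_sym (adj_sym S)). Qed.

Lemma Re_out S d : d \notin S -> Re S d.
Proof.
move=> dS; apply: connect1; apply/existsP; exists d; by rewrite dS !eqxx.
Qed.

Lemma R_mono S S' x y : {subset S <= S'} -> R S' x y -> R S x y.
Proof.
move=> sub; apply: connect_sub => u v /existsP[d /andP[dS H]].
apply: connect1; apply/existsP; exists d; rewrite H andbT.
by apply/negP => /sub; apply/negP.
Qed.

Lemma R_split S S' e x y : {subset S' <= e |: S} -> R S x y ->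
  [\/ R S' x y, R S' x (src e) /\ R S' (tgt e) y
    | R S' x (tgt e) /\ R S' (src e) y].
Proof.
move=> sub /connectP[p]; elim: p x => [|z p IH] x /=.
  by move=> _ ->; constructor 1; exact: connect0.
move=> /andP[axz pzp] ylast.
have IHz := IH z pzp ylast.
move: axz => /existsP[d /andP[dS H]].
case: (boolP (d \in S')) => dS'.
  have de : d = e.
    by move: (sub d dS'); rewrite !inE (negbTE dS) orbF => /eqP.
  subst d.
  case/orP: H => /andP[/eqP sx /eqP tz]; subst x z.
    case: IHz => [h|[h1 h2]|[h1 h2]].
    - by constructor 2; split=> //; exact: connect0.
    - by constructor 2; split=> //; exact: connect0.
    - by constructor 1.
  case: IHz => [h|[h1 h2]|[h1 h2]].
  - by constructor 3; split=> //; exact: connect0.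
  - by constructor 1.
  - by constructor 3; split=> //; exact: connect0.
have axz : R S' x z.
  apply: connect1; apply/existsP; exists d; by rewrite dS' H.
case: IHz => [h|[h1 h2]|[h1 h2]].
- by constructor 1; exact: connect_trans axz h.
- by constructor 2; split=> //; exact: connect_trans axz h1.
- by constructor 3; split=> //; exact: connect_trans axz h1.
Qed.

Lemma R_drop S S' e x y : {subset S' <= e |: S} -> Re S' e -> R S x y -> R S' x y.
Proof.
move=> sub he /(R_split sub) [h|[h1 h2]|[h1 h2]] //.
  exact: connect_trans (connect_trans h1 he) h2.
rewrite R_sym in he.
exact: connect_trans (connect_trans h1 he) h2.
Qed.

Definition cls S x := [set y | R S x y].

Lemma cut_of S d : d \in S -> ~~ Re S d -> is_edge_cut src tgt S.
Proof.
move=> dS nR; rewrite /is_edge_cut /ncomp.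
set f := fun X : {set V} => [set y | [exists x in X, R set0 x y]].
have fE x : f (cls S x) = cls set0 x.
  apply/setP => y; rewrite !inE; apply/existsP/idP.
    case=> z /andP[]; rewrite inE => Rxz Rzy.
    apply: connect_trans Rzy; apply: R_mono Rxz; by move=> ?; rewrite inE.
  by move=> h; exists x; rewrite inE connect0.
have -> : [set [set y | R set0 x y] | x : V] = f @: [set cls S x | x : V].
  by rewrite -imset_comp; apply: eq_imset => x /=; rewrite fE.
rewrite ltn_neqAle leq_imset_card andbT.
apply/imset_injP => inj.
have : cls S (src d) = cls S (tgt d).
  apply: inj; try by apply/imsetP; eexists.
  rewrite !fE; apply/setP => y; rewrite !inE; apply/idP/idP => h.
    apply: connect_trans h; rewrite R_sym; apply: Re_out; by rewrite inE.
  apply: connect_trans h; apply: Re_out; by rewrite inE.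
move/setP => /(_ (tgt d)); rewrite !inE connect0 => h.
by rewrite h in nR.
Qed.

Lemma cut_ex S : is_edge_cut src tgt S -> exists2 d, d \in S & ~~ Re S d.
Proof.
case: (boolP [exists d in S, ~~ Re S d]) => [/exists_inP[d ? ?]|/exists_inPn H].
  by exists d.
have eqR x y : R S x y = R set0 x y.
  apply/idP/idP; first by apply: R_mono => ?; rewrite inE.
  apply: connect_sub => u v /existsP[d /andP[_ h]].
  case: (boolP (d \in S)) => dS.
    have := H d dS; rewrite negbK.
    by case/orP: h => /andP[/eqP<- /eqP<-] // ; rewrite R_sym.
  apply: connect1; apply/existsP; exists d; by rewrite dS.
rewrite /is_edge_cut /ncomp.
have -> : [set [set y | R S x y] | x : V] = [set [set y | R set0 x y] | x : V].
  apply: eq_imset => x; apply/setP => y; by rewrite !inE eqR.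
by rewrite ltnn.
Qed.

Lemma noncut S d : ~ is_edge_cut src tgt S -> Re S d.
Proof.
move=> nc; case: (boolP (d \in S)) => dS; last exact: Re_out.
by apply/negPn/negP => h; apply: nc; exact: cut_of dS h.
Qed.

Lemma cut_mono S S' : {subset S <= S'} -> is_edge_cut src tgt S -> is_edge_cut src tgt S'.
Proof.
move=> sub /cut_ex[d dS nR]; apply: (cut_of (sub d dS)).
by apply: contra nR; apply: R_mono.
Qed.

Lemma cut_nR S S' e : is_edge_cut src tgt S' -> {subset S' <= e |: S} ->
  ~ is_edge_cut src tgt S -> ~~ Re S' e.
Proof.
move=> c sub nc; apply/negP => he.
case: (cut_ex c) => d dS nR; apply/negP: nR.
rewrite negbK; apply: (R_drop sub he); exact: noncut.
Qed.


Lemma ncP e1 e2 f : ~ is_edge_cut src tgt [set e1; f] ->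
  ~~ Re [set e1; e2] e1 -> e1 != e2 -> e1 != f ->
  ~ is_edge_cut src tgt [set e2; f].
Proof.
move=> ncF nA n12 n1f cP.
have RPe1 : Re [set e2; f] e1.
  by apply: Re_out; rewrite !inE negb_or n12 n1f.
have RPe2 : Re [set e2; f] e2.
  case: (R_split (S' := [set e1; e2; f]) (e := e2) _ (noncut e1 ncF)).
  - by subt.
  - move=> h; case/negP: nA; apply: R_mono h; by subt.
  - case=> h1 h2.
    have h1' : R [set e2; f] (src e1) (src e2) by apply: R_mono h1; subt.
    have h2' : R [set e2; f] (tgt e2) (tgt e1) by apply: R_mono h2; subt.
    rewrite R_sym in h1'.
    apply: connect_trans (connect_trans h1' RPe1) _; by rewrite R_sym.
  - case=> h1 h2.
    have h1' : R [set e2; f] (src e1) (tgt e2) by apply: R_mono h1; subt.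
    have h2' : R [set e2; f] (src e2) (tgt e1) by apply: R_mono h2; subt.
    rewrite R_sym in h1'.
    apply: connect_trans h2' _; rewrite R_sym.
    exact: connect_trans h1' RPe1.
have [d dP nR] := cut_ex cP; case/negP: nR.
have := noncut d ncF; apply: R_drop RPe2; by subt.
Qed.

Lemma main (noloop : forall e, src e != tgt e) (e1 e2 f1 f2 : E) :
  is_k_edge_cut src tgt 2 [set e1; e2] ->
  is_k_edge_cut src tgt 3 [set e1; f1; f2] ->
  is_k_edge_cut src tgt 3 [set e2; f1; f2].
Proof.
move=> [cA2 cA minA] [cB3 cB minB].
have n12 : e1 != e2 by move: cA2; rewrite cards2; case: (e1 != e2).
have [n1f1 n1f2 nf12] : [/\ e1 != f1, e1 != f2 & f1 != f2].
  have E3 : [set e1; f1; f2] = e1 |: [set f1; f2] by apply/setP; subt.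
  by move: cB3; rewrite E3 cardsU1 cards2 !inE; do ! case: (_ == _).
have nc1 : ~ is_edge_cut src tgt [set e1; f1].
  apply: (minB); apply/properP; split; first by apply/subsetP; subt.
  exists f2; rewrite !inE ?eqxx ?orbT //= negb_or eq_sym n1f2 /=.
  by rewrite eq_sym.
have nc2 : ~ is_edge_cut src tgt [set e1; f2].
  apply: (minB); apply/properP; split; first by apply/subsetP; subt.
  exists f1; rewrite !inE ?eqxx ?orbT //= negb_or eq_sym n1f1 /=.
  done.
have nc3 : ~ is_edge_cut src tgt [set f1; f2].
  apply: (minB); apply/properP; split; first by apply/subsetP; subt.
  exists e1; rewrite !inE ?eqxx ?orbT //= negb_or n1f1 n1f2.
  done.
have ncE1 : ~ is_edge_cut src tgt [set e1].
  apply: (minA); apply/properP; split; first by apply/subsetP; subt.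
  by exists e2; rewrite !inE ?eqxx ?orbT //= eq_sym.
have ncE2 : ~ is_edge_cut src tgt [set e2].
  apply: (minA); apply/properP; split; first by apply/subsetP; subt.
  by exists e1; rewrite !inE ?eqxx ?orbT //=.
have n2f1 : e2 != f1 by apply/eqP => E0; apply: (nc1); rewrite -E0.
have n2f2 : e2 != f2 by apply/eqP => E0; apply: (nc2); rewrite -E0.
have nA1 : ~~ Re [set e1; e2] e1 by apply: (cut_nR cA _ ncE2); subt.
have nA2 : ~~ Re [set e1; e2] e2 by apply: (cut_nR cA _ ncE1); subt.
have nB1 : ~~ Re [set e1; f1; f2] e1 by apply: (cut_nR cB _ nc3); subt.
have RBe2 : Re [set e1; f1; f2] e2.
  by apply: Re_out; rewrite !inE !negb_or eq_sym n12 n2f1 n2f2.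
split.
- have E3 : [set e2; f1; f2] = e2 |: [set f1; f2] by apply/setP; subt.
  by rewrite E3 cardsU1 cards2 !inE negb_or n2f1 n2f2 nf12.
- apply: (cut_of (d := e2)); first by rewrite !inE eqxx.
  apply/negP => h.
  case: (R_split (S' := [set e1; e2; f1; f2]) (e := e1) _ h).
  + by subt.
  + move=> h'; case/negP: nA2; apply: R_mono h'; by subt.
  + case=> h1 h2.
    have h1' : R [set e1; f1; f2] (src e2) (src e1) by apply: R_mono h1; subt.
    have h2' : R [set e1; f1; f2] (tgt e1) (tgt e2) by apply: R_mono h2; subt.
    case/negP: nB1; rewrite R_sym in h1'.
    apply: connect_trans (connect_trans h1' RBe2) _; by rewrite R_sym.
  + case=> h1 h2.
    have h1' : R [set e1; f1; f2] (src e2) (tgt e1) by apply: R_mono h1; subt.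
    have h2' : R [set e1; f1; f2] (src e1) (tgt e2) by apply: R_mono h2; subt.
    case/negP: nB1.
    apply: connect_trans h2' _.
    rewrite R_sym in RBe2; exact: connect_trans RBe2 h1'.
- move=> T /properP[/subsetP sub [a aC aT]] cT.
  have [Ea|na2] := eqVneq a e2.
    subst a; apply: nc3; apply: cut_mono cT => x xT.
    have hx := sub x xT; case: (eqVneq x e2) => [Ex|nx].
      by move: aT; rewrite -Ex xT.
    by move: hx; rewrite !inE (negbTE nx); do ! case: (_ == _).
  have [Ea|na1] := eqVneq a f1.
    subst a; apply: (ncP nc2 nA1 n12 n1f2); apply: cut_mono cT => x xT.
    have hx := sub x xT; case: (eqVneq x f1) => [Ex|nx].
      by move: aT; rewrite -Ex xT.
    by move: hx; rewrite !inE (negbTE nx); do ! case: (_ == _).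
  have Ea : a = f2 by move: aC; rewrite !inE (negbTE na2) (negbTE na1) => /eqP.
    subst a; apply: (ncP nc1 nA1 n12 n1f1); apply: cut_mono cT => x xT.
    have hx := sub x xT; case: (eqVneq x f2) => [Ex|nx].
      by move: aT; rewrite -Ex xT.
    by move: hx; rewrite !inE (negbTE nx); do ! case: (_ == _).
Qed.

End Aux.

Theorem lemma4 (V E : finType) (src tgt : E -> V)
  (noloop : forall e, src e != tgt e) (e1 e2 f1 f2 : E) :
  is_k_edge_cut src tgt 2 [set e1; e2] ->
  is_k_edge_cut src tgt 3 [set e1; f1; f2] ->
  is_k_edge_cut src tgt 3 [set e2; f1; f2].
Proof. exact: main. Qed.
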